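(* Let $\{(\mathbf{x}^k,\mathbf{r}^k,\boldsymbol{\lambda}^k)\}$ be generated by Algorithm 2 under the bounded-delay assumption, let $k\ge0$ and $\alpha>0$. Then for any $\mathbf{x}$ independent of $i_k$ with $\mathbf{A}\mathbf{x}=\mathbf{b}$, $$\begin{aligned}&\mathbb{E}_{i_k}\Big[F(\mathbf{x}^{k+1})-F(\mathbf{x})-\langle\boldsymbol{\lambda}^{k+1},\mathbf{r}^{k+1}\rangle+(\beta-\rho)\|\mathbf{r}^{k+1}\|^2-\tfrac{\beta}{2}\|\mathbf{r}^{k+1}\|^2+\tfrac12\|\mathbf{x}^{k+1}-\mathbf{x}\|_{\mathbf{P}}^2\Big]+\tfrac12\mathbb{E}_{i_k}\|\mathbf{x}^{k+1}-\mathbf{x}^k\|^2_{\mathbf{P}-\mathbf{L}-\alpha L_c\mathbf{I}-\beta\mathbf{A}^\top\mathbf{A}}\\&-\frac{\kappa L_r\tau/\alpha+2L_r\tau}{2m}\sum_{d=k-\tau}^{k-1}\|\mathbf{x}^{d+1}-\mathbf{x}^d\|^2-\frac{1}{2m}\sum_{d=k-\tau}^{k-1}\|\mathbf{x}^{d+1}-\mathbf{x}^d\|^2_{\mathbf{L}}\\&\le\Big(1-\frac1m\Big)\Big[F(\mathbf{x}^k)-F(\mathbf{x})-\langle\boldsymbol{\lambda}^k,\mathbf{r}^k\rangle+\beta\|\mathbf{r}^k\|^2\Big]-\tfrac{\beta}{2}\|\mathbf{r}^k\|^2+\tfrac12\|\mathbf{x}^k-\mathbf{x}\|_{\mathbf{P}}^2,\end{aligned}$$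 where $\mathbf{P}=\mathrm{blkdiag}(\mathbf{P}_1,\ldots,\mathbf{P}_m)$, $L_c=\max_iL_i$, $\kappa=L_r/L_c$, $\mathbf{x}^d:=\mathbf{x}^0$ for $d<0$, and $\|\mathbf{z}\|_{\mathbf{M}}^2:=\mathbf{z}^\top\mathbf{M}\mathbf{z}$ for symmetric $\mathbf{M}$.
   Context: Problem: $\min_{\mathbf{x}} F(\mathbf{x}):=f(\mathbf{x})+g(\mathbf{x})$ s.t. $\mathbf{A}\mathbf{x}=\mathbf{b}$, where $\mathbf{x}=(\mathbf{x}_1;\ldots;\mathbf{x}_m)$ with blocks $\mathbf{x}_i\in\mathbb{R}^{n_i}$, $g(\mathbf{x})=\sum_{i=1}^m g_i(\mathbf{x}_i)$, $\mathbf{A}=[\mathbf{A}_1,\ldots,\mathbf{A}_m]$ with $\mathbf{A}_i\in\mathbb{R}^{q\times n_i}$, $\mathbf{b}\in\mathbb{R}^q$; $f$ is convex and continuously differentiable, each $g_i$ is proper, convex, lower semicontinuous. $\mathbf{U}_i\mathbf{y}$ denotes the vector whose $i$-th block is $\mathbf{y}_i$ and other blocks zero. Assumption (gradient Lipschitz continuity): there are constants $L_i>0$ and $L_r$ with $\|\nabla_i f(\mathbf{x}+\mathbf{U}_i\mathbf{y})-\nabla_i f(\mathbf{x})\|\le L_i\|\mathbf{y}_i\|$ and $\|\nabla f(\mathbf{x}+\mathbf{U}_i\mathbf{y})-\nabla f(\mathbf{x})\|\le L_r\|\mathbf{y}_i\|$ for all $i,\mathbf{x},\mathbf{y}$. $\mathbf{L}=\mathrm{blkdiag}(L_1\mathbf{I}_{n_1},\ldots,L_m\mathbf{I}_{n_m})$.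 Algorithm 2 (async-parallel randomized primal-dual block update, as analyzed): choose $\mathbf{x}^0$, $\boldsymbol{\lambda}^0=\mathbf{0}$, $\mathbf{r}^0=\mathbf{A}\mathbf{x}^0-\mathbf{b}$, $\beta>0,\rho>0$, symmetric PSD $\mathbf{P}_i$. At iteration $k$, a block index $i_k\in\{1,\ldots,m\}$ and a (possibly outdated) point $\hat{\mathbf{x}}^k$ are used; $\mathbf{x}_i^{k+1}=\mathbf{x}_i^k$ for $i\ne i_k$ and $$\mathbf{x}_{i_k}^{k+1}\in\arg\min_{\mathbf{x}_{i_k}}\big\langle\nabla_{i_k} f(\hat{\mathbf{x}}^k)-\mathbf{A}_{i_k}^\top(\boldsymbol{\lambda}^k-\beta\mathbf{r}^k),\mathbf{x}_{i_k}\big\rangle+g_{i_k}(\mathbf{x}_{i_k})+\tfrac12\|\mathbf{x}_{i_k}-\mathbf{x}_{i_k}^k\|_{\mathbf{P}_{i_k}}^2;$$ then $\mathbf{r}^{k+1}=\mathbf{r}^k+\mathbf{A}_{i_k}(\mathbf{x}_{i_k}^{k+1}-\mathbf{x}_{i_k}^k)$ and $\boldsymbol{\lambda}^{k+1}=\boldsymbol{\lambda}^k-\rho\mathbf{r}^{k+1}$. Conditionally on the history before iteration $k$ (which determines $\mathbf{x}^k,\mathbf{r}^k,\boldsymbol{\lambda}^k$ and $\hat{\mathbf{x}}^k$), $i_k$ is uniformly distributed on $\{1,\ldots,m\}$; $\mathbb{E}_{i_k}$ denotes this conditional expectation, and ''$\mathbf{x}$ independent of $i_k$'' means $\mathbf{x}$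 is determined by that history. Assumption (bounded delay): there is an integer $\tau\ge0$ such that $\hat{\mathbf{x}}^k=\mathbf{x}^k+\sum_{d\in J(k)}(\mathbf{x}^d-\mathbf{x}^{d+1})$ for some subset $J(k)\subseteq\{k-\tau,\ldots,k-1\}$. *)

(* Defs.v *)
From Stdlib Require Import Reals.
From mathcomp Require Import all_boot.
From Stdlib Require Import Reals.


Open Scope R_scope.

Inductive ereal := EFin (r : R) | EInf.

Definition ele (a b : ereal) : Prop :=
  match a, b with
  | _, EInf => True
  | EInf, EFin _ => False
  | EFin x, EFin y => x <= y
  end.

Definition elt (a : R) (e : ereal) : Prop :=
  match e with EFin y => a < y | EInf => True end.

Definition eplus (a b : ereal) : ereal :=
  match a, b with EFin x, EFin y => EFin (x + y) | _, _ => EInf end.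

(* real value of a finite extended real (only used on finite values) *)
Definition efin_val (e : ereal) : R := match e with EFin x => x | EInf => 0 end.

Definition vsum {U : finType} (F : U -> R) : R := \big[Rplus/0]_(j : U) F j.
Definition ip {U : finType} (x y : U -> R) : R := vsum (fun j => x j * y j).
Definition vnorm {U : finType} (x : U -> R) : R := sqrt (ip x x).
Definition vadd {U : finType} (x y : U -> R) : U -> R := fun j => x j + y j.
Definition vsub {U : finType} (x y : U -> R) : U -> R := fun j => x j - y j.
Definition vscale {U : finType} (t : R) (x : U -> R) : U -> R := fun j => t * x j.

Definition qform {U : finType} (M : U -> U -> R) (z : U -> R) : R :=
  vsum (fun j => vsum (fun j' => z j * M j j' * z j')).

Definition convex_fun {U : finType} (f : (U -> R) -> R) : Prop :=
  forall (x y : U -> R) (t : R), 0 <= t <= 1 ->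
    f (vadd (vscale t x) (vscale (1 - t) y)) <= t * f x + (1 - t) * f y.

Definition is_gradient {U : finType} (f : (U -> R) -> R) (gradf : (U -> R) -> U -> R) : Prop :=
  forall x eps, 0 < eps -> exists delta, 0 < delta /\
    forall y, vnorm (vsub y x) < delta ->
      Rabs (f y - f x - ip (gradf x) (vsub y x)) <= eps * vnorm (vsub y x).

Definition continuous_map {U V : finType} (h : (U -> R) -> V -> R) : Prop :=
  forall x eps, 0 < eps -> exists delta, 0 < delta /\
    forall y, vnorm (vsub y x) < delta -> vnorm (vsub (h y) (h x)) < eps.

Definition convex_efun {U : finType} (g : (U -> R) -> ereal) : Prop :=
  forall (x y : U -> R) (t a c : R), 0 <= t <= 1 -> g x = EFin a -> g y = EFin c ->
    ele (g (vadd (vscale t x) (vscale (1 - t) y))) (EFin (t * a + (1 - t) * c)).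

Definition proper_efun {U : finType} (g : (U -> R) -> ereal) : Prop :=
  exists x, g x <> EInf.

Definition lsc_efun {U : finType} (g : (U -> R) -> ereal) : Prop :=
  forall x a, elt a (g x) -> exists delta, 0 < delta /\
    forall y, vnorm (vsub y x) < delta -> elt a (g y).

Definition Blk {T : finType} {m : nat} (blk : T -> 'I_m) (i : 'I_m) : finType :=
  {j : T | blk j == i}.

Definition restr {T : finType} {m : nat} (blk : T -> 'I_m) (i : 'I_m) (x : T -> R)
  : Blk blk i -> R := fun s => x (proj1_sig s).

Definition bsum {T : finType} {m : nat} (blk : T -> 'I_m) (i : 'I_m) (F : T -> R) : R :=
  \big[Rplus/0]_(j : T | blk j == i) F j.

Definition bnorm {T : finType} {m : nat} (blk : T -> 'I_m) (i : 'I_m) (y : T -> R) : R :=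
  sqrt (bsum blk i (fun j => y j ^ 2)).

Definition Uop {T : finType} {m : nat} (blk : T -> 'I_m) (i : 'I_m) (y : T -> R) : T -> R :=
  fun j => if blk j == i then y j else 0.

Definition Amul {T : finType} {q : nat} (A : 'I_q -> T -> R) (z : T -> R) : 'I_q -> R :=
  fun r => vsum (fun j => A r j * z j).

Definition Pfull {T : finType} {m : nat} (blk : T -> 'I_m) (Pb : 'I_m -> T -> T -> R)
  : T -> T -> R := fun j j' => if blk j == blk j' then Pb (blk j) j j' else 0.
Definition Lmat {T : finType} {m : nat} (blk : T -> 'I_m) (Lb : 'I_m -> R)
  : T -> T -> R := fun j j' => if j == j' then Lb (blk j) else 0.
Definition Imat {T : finType} : T -> T -> R := fun j j' => if j == j' then 1 else 0.
Definition AtA {T : finType} {q : nat} (A : 'I_q -> T -> R) : T -> T -> R :=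
  fun j j' => vsum (fun r => A r j * A r j').

Definition Lc {m : nat} (Lb : 'I_m -> R) : R := \big[Rmax/0]_(i < m) Lb i.

(* F(x) = f(x) + sum_i g_i(x_i) (real value; used only on dom F) *)
Definition Fval {T : finType} {m : nat} (blk : T -> 'I_m) (f : (T -> R) -> R)
  (g : forall i : 'I_m, (Blk blk i -> R) -> ereal) (x : T -> R) : R :=
  f x + \big[Rplus/0]_(i < m) efin_val (g i (restr blk i x)).

Definition block_obj {T : finType} {m q : nat} (blk : T -> 'I_m) (gradf : (T -> R) -> T -> R)
  (g : forall i : 'I_m, (Blk blk i -> R) -> ereal) (A : 'I_q -> T -> R)
  (Pb : 'I_m -> T -> T -> R) (beta : R) (i : 'I_m)
  (xk xhat : T -> R) (lam r : 'I_q -> R) (w : Blk blk i -> R) : ereal :=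
  let c := fun s : Blk blk i =>
     gradf xhat (proj1_sig s) - vsum (fun l => A l (proj1_sig s) * (lam l - beta * r l)) in
  let z := fun s : Blk blk i => w s - xk (proj1_sig s) in
  eplus (EFin (ip c w + / 2 * qform (fun s s' : Blk blk i => Pb i (proj1_sig s) (proj1_sig s')) z))
        (g i w).

Definition x_step {T : finType} {m q : nat} (blk : T -> 'I_m) (gradf : (T -> R) -> T -> R)
  (g : forall i : 'I_m, (Blk blk i -> R) -> ereal) (A : 'I_q -> T -> R)
  (Pb : 'I_m -> T -> T -> R) (beta : R) (i : 'I_m)
  (xk xhat : T -> R) (lam r : 'I_q -> R) (xk1 : T -> R) : Prop :=
  (forall j, blk j != i -> xk1 j = xk j) /\
  (forall w, ele (block_obj blk gradf g A Pb beta i xk xhat lam r (restr blk i xk1))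
                 (block_obj blk gradf g A Pb beta i xk xhat lam r w)).

Definition r_next {T : finType} {m q : nat} (blk : T -> 'I_m) (A : 'I_q -> T -> R)
  (i : 'I_m) (xk xk1 : T -> R) (rk : 'I_q -> R) : 'I_q -> R :=
  fun l => rk l + bsum blk i (fun j => A l j * (xk1 j - xk j)).

Definition lam_next {q : nat} (rho : R) (lamk rk1 : 'I_q -> R) : 'I_q -> R :=
  fun l => lamk l - rho * rk1 l.

(* bounded delay: xhat^d = x^d + sum_{e in J(d)} (x^e - x^{e+1}), J(d) in {d-tau,...,d-1};
   indices e < 0 contribute 0 since x^e := x^0 for e < 0 *)
Definition bounded_delay {T : finType} (tau : nat) (xs : nat -> T -> R) (xhat : T -> R)
  (d : nat) : Prop :=
  exists J : pred nat, forall j,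
    xhat j = xs d j + \big[Rplus/0]_(d - tau <= e < d | J e) (xs e j - xs e.+1 j).

(* Main.v *)
Require Import Defs.
From HB Require Import structures.
From Stdlib Require Import Reals Lra Psatz FunctionalExtensionality.
From mathcomp Require Import all_boot.
From Stdlib Require Import Reals.
Open Scope R_scope.


Lemma Rplus_assoc' : associative Rplus. Proof. by move=> *; rewrite Rplus_assoc. Qed.
HB.instance Definition _ := Monoid.isComLaw.Build R 0 Rplus Rplus_assoc' Rplus_comm Rplus_0_l.

Lemma bigR_ext (I : Type) (r : seq I) (P : pred I) (F G : I -> R) :
  (forall j, F j = G j) -> \big[Rplus/0]_(j <- r | P j) F j = \big[Rplus/0]_(j <- r | P j) G j.
Proof. by move=> H; apply: eq_bigr => j _; apply: H. Qed.

Lemma bigR_add (I : Type) (r : seq I) (P : pred I) (F G : I -> R) :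
  \big[Rplus/0]_(j <- r | P j) (F j + G j) =
  \big[Rplus/0]_(j <- r | P j) F j + \big[Rplus/0]_(j <- r | P j) G j.
Proof. exact: big_split. Qed.

Lemma bigR_scal (I : Type) (r : seq I) (P : pred I) (c : R) (F : I -> R) :
  \big[Rplus/0]_(j <- r | P j) (c * F j) = c * \big[Rplus/0]_(j <- r | P j) F j.
Proof.
rewrite (big_endo (fun x => c * x)) //; last by rewrite Rmult_0_r.
by move=> x y; rewrite Rmult_plus_distr_l.
Qed.

Lemma bigR_le (I : Type) (r : seq I) (P : pred I) (F G : I -> R) :
  (forall j, P j -> F j <= G j) ->
  \big[Rplus/0]_(j <- r | P j) F j <= \big[Rplus/0]_(j <- r | P j) G j.
Proof.
move=> H; apply: (big_ind2 (fun x y => x <= y)) => //; first lra.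
by move=> *; lra.
Qed.

Lemma bigR_ge0 (I : Type) (r : seq I) (P : pred I) (F : I -> R) :
  (forall j, P j -> 0 <= F j) -> 0 <= \big[Rplus/0]_(j <- r | P j) F j.
Proof.
move=> H; apply: (big_ind (fun x => 0 <= x)) => //; first lra.
by move=> *; lra.
Qed.

Lemma bigR_const_ord (n : nat) (c : R) : \big[Rplus/0]_(i < n) c = INR n * c.
Proof.
rewrite big_const_ord; elim: n => [|n IH]; first by simpl; lra.
rewrite S_INR; move: IH => /= ->; lra.
Qed.

Lemma bigR_0 (I : Type) (r : seq I) (P : pred I) : \big[Rplus/0]_(j <- r | P j) 0 = 0.
Proof. by rewrite big1. Qed.

Lemma vsum_ext {U : finType} (F G : U -> R) : (forall j, F j = G j) -> vsum F = vsum G.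
Proof. exact: bigR_ext. Qed.
Lemma vsum_add {U : finType} (F G : U -> R) : vsum (fun j => F j + G j) = vsum F + vsum G.
Proof. exact: bigR_add. Qed.
Lemma vsum_scal {U : finType} (c : R) (F : U -> R) : vsum (fun j => c * F j) = c * vsum F.
Proof. exact: bigR_scal. Qed.
Lemma vsum_le {U : finType} (F G : U -> R) : (forall j, F j <= G j) -> vsum F <= vsum G.
Proof. by move=> H; apply: bigR_le. Qed.
Lemma vsum_ge0 {U : finType} (F : U -> R) : (forall j, 0 <= F j) -> 0 <= vsum F.
Proof. by move=> H; apply: bigR_ge0. Qed.
Lemma vsum_zero {U : finType} : vsum (fun _ : U => 0) = 0.
Proof. exact: bigR_0. Qed.
Lemma vsum_opp {U : finType} (F : U -> R) : vsum (fun j => - F j) = - vsum F.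
Proof.
rewrite -(vsum_ext (fun j => (-1) * F j)); last by move=> j; ring.
rewrite vsum_scal; ring.
Qed.
Lemma vsum_sub {U : finType} (F G : U -> R) : vsum (fun j => F j - G j) = vsum F - vsum G.
Proof.
rewrite (vsum_ext _ (fun j => F j + - G j)) // vsum_add vsum_opp; ring.
Qed.

Lemma ip_ge0 {U : finType} (a : U -> R) : 0 <= ip a a.
Proof. apply: vsum_ge0 => j; nra. Qed.

Lemma ip_sym {U : finType} (a b : U -> R) : ip a b = ip b a.
Proof. apply: vsum_ext => j; ring. Qed.

Lemma ip_ext {U : finType} (a a' b b' : U -> R) :
  (forall j, a j = a' j) -> (forall j, b j = b' j) -> ip a b = ip a' b'.
Proof. move=> Ha Hb; apply: vsum_ext => j; by rewrite Ha Hb. Qed.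

Lemma vnorm_ext {U : finType} (a a' : U -> R) : (forall j, a j = a' j) -> vnorm a = vnorm a'.
Proof. by move=> H; rewrite /vnorm (ip_ext a a' a a'). Qed.

Lemma vnorm_ge0 {U : finType} (a : U -> R) : 0 <= vnorm a.
Proof. exact: sqrt_pos. Qed.

Lemma vnorm_sq {U : finType} (a : U -> R) : vnorm a * vnorm a = ip a a.
Proof. by rewrite /vnorm sqrt_sqrt //; apply: ip_ge0. Qed.

Lemma ip_scal_l {U : finType} (c : R) (a b : U -> R) : ip (fun j => c * a j) b = c * ip a b.
Proof. rewrite /ip -vsum_scal; apply: vsum_ext => j; ring. Qed.

Lemma vnorm_scale {U : finType} (h : R) (u : U -> R) : vnorm (vscale h u) = Rabs h * vnorm u.
Proof.
rewrite /vnorm (_ : ip (vscale h u) (vscale h u) = (h * h) * ip u u).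
- rewrite sqrt_mult; [|nra|apply: ip_ge0].
  by rewrite -sqrt_Rsqr_abs.
- rewrite /ip -vsum_scal; apply: vsum_ext => j; rewrite /vscale; ring.
Qed.


Lemma ip_quad {U : finType} (a b : U -> R) (t : R) :
  0 <= ip a a - 2 * t * ip a b + t * t * ip b b.
Proof.
have H := ip_ge0 (fun j => a j - t * b j).
suff <- : ip (fun j => a j - t * b j) (fun j => a j - t * b j) =
  ip a a - 2 * t * ip a b + t * t * ip b b by [].
rewrite /ip -!vsum_scal -vsum_sub -vsum_add; apply: vsum_ext => j; ring.
Qed.

Lemma cauchy_schwarz {U : finType} (a b : U -> R) : ip a b <= vnorm a * vnorm b.
Proof.
have HA := ip_ge0 a; have HB := ip_ge0 b.
have Q := ip_quad a b.
set A := ip a a in HA Q *; set B := ip b b in HB Q *; set C := ip a b in Q *.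
have Hn : 0 <= vnorm a * vnorm b by apply: Rmult_le_pos; apply: vnorm_ge0.
case: (Rle_lt_dec C 0) => HC; first lra.
have HCC : C * C <= A * B.
  case: (Rle_lt_dec B 0) => HB0.
    have HB' : B = 0 by lra.
    have := Q ((A + 1) / (2 * C)); rewrite HB'.
    have -> : 2 * ((A + 1) / (2 * C)) * C = A + 1 by field; lra.
    lra.
  have := Q (C / B).
  have -> : 2 * (C / B) * C = 2 * (C * C) / B by field; lra.
  have -> : C / B * (C / B) * B = (C * C) / B by field; lra.
  move=> H.
  have : 0 <= (A - (C * C) / B) * B by nra.
  have -> : (A - C * C / B) * B = A * B - C * C by field; lra.
  lra.
rewrite /vnorm -sqrt_mult //.
rewrite -(sqrt_square C); last lra.
by apply: sqrt_le_1_alt.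
Qed.

Lemma vnorm_triangle {U : finType} (a b : U -> R) :
  vnorm (fun j => a j + b j) <= vnorm a + vnorm b.
Proof.
have Ha := vnorm_ge0 a; have Hb := vnorm_ge0 b.
have Hcs := cauchy_schwarz a b.
have E : ip (fun j => a j + b j) (fun j => a j + b j) = ip a a + 2 * ip a b + ip b b.
  rewrite /ip -vsum_scal -!vsum_add; apply: vsum_ext => j; ring.
rewrite /vnorm E -(sqrt_square (vnorm a + vnorm b)); last lra.
apply: sqrt_le_1_alt.
have H1 := vnorm_sq a. have H2 := vnorm_sq b. nra.
Qed.

Lemma young (a b c : R) : 0 < c -> a * b <= c / 2 * (a * a) + / (2 * c) * (b * b).
Proof.
move=> Hc.
have H : 0 <= (c * a - b) * (c * a - b) by apply: Rle_0_sqr.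
have -> : c / 2 * (a * a) + / (2 * c) * (b * b) = ((c * a) * (c * a) + b * b) / (2 * c) by field; lra.
apply: (Rmult_le_reg_r (2 * c)); first lra.
rewrite (_ : ((c * a) * (c * a) + b * b) / (2 * c) * (2 * c) = (c * a) * (c * a) + b * b); [nra|field; lra].
Qed.


Lemma blk_sum (T : finType) (m : nat) (blk : T -> 'I_m) (i : 'I_m) (F : T -> R) :
  \big[Rplus/0]_(s : Blk blk i) F (proj1_sig s) = bsum blk i F.
Proof.
rewrite /bsum /Blk.
rewrite (reindex_omap (val : {j : T | blk j == i} -> T) insub); last first.
  by move=> j Pj; rewrite insubT.
apply: eq_bigl => -[j Pj] /=. by rewrite insubT ?Pj /= eqxx.
Qed.

Lemma bsum_mkcond (T : finType) (m : nat) (blk : T -> 'I_m) (i : 'I_m) (F : T -> R) :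
  bsum blk i F = vsum (fun j => if blk j == i then F j else 0).
Proof. by rewrite /bsum big_mkcond. Qed.

Lemma bsum_ext (T : finType) (m : nat) (blk : T -> 'I_m) (i : 'I_m) (F G : T -> R) :
  (forall j, blk j = i -> F j = G j) -> bsum blk i F = bsum blk i G.
Proof. by move=> H; apply: eq_bigr => j /eqP; apply: H. Qed.

Lemma vsum_supp (T : finType) (m : nat) (blk : T -> 'I_m) (i : 'I_m) (F : T -> R) :
  (forall j, blk j <> i -> F j = 0) -> vsum F = bsum blk i F.
Proof.
move=> H; rewrite bsum_mkcond; apply: vsum_ext => j.
case: eqP => // /H; done.
Qed.

Lemma vsum_part (T : finType) (m : nat) (blk : T -> 'I_m) (F : T -> R) :
  vsum F = \big[Rplus/0]_(i < m) bsum blk i F.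
Proof.
rewrite /vsum (partition_big blk xpredT) //.
Qed.

Lemma bnorm_Uop (T : finType) (m : nat) (blk : T -> 'I_m) (i : 'I_m) (v : T -> R) :
  bnorm blk i v = vnorm (Uop blk i v).
Proof.
rewrite /bnorm /vnorm /ip bsum_mkcond; congr sqrt; apply: vsum_ext => j.
rewrite /Uop; case: eqP => _; ring.
Qed.

Lemma Uop_supp (T : finType) (m : nat) (blk : T -> 'I_m) (i : 'I_m) (u : T -> R) :
  (forall j, blk j <> i -> u j = 0) -> Uop blk i u = u.
Proof.
move=> H; apply: functional_extensionality => j; rewrite /Uop.
by case: eqP => // /H ->.
Qed.

Lemma ip_supp (T : finType) (m : nat) (blk : T -> 'I_m) (i : 'I_m) (a u : T -> R) :
  (forall j, blk j <> i -> u j = 0) -> ip a u = ip (Uop blk i a) u.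
Proof.
move=> H; apply: vsum_ext => j; rewrite /Uop; case: eqP => // /H ->; ring.
Qed.


Lemma ip_scal_r {U : finType} (c : R) (a b : U -> R) : ip a (fun j => c * b j) = c * ip a b.
Proof. rewrite /ip -vsum_scal; apply: vsum_ext => j; ring. Qed.

Lemma abs_le_inv (x y : R) : Rabs x <= y -> - y <= x <= y.
Proof. move=> H; split_Rabs; lra. Qed.

Lemma grad_ineq {U : finType} (f : (U -> R) -> R) gradf :
  convex_fun f -> is_gradient f gradf ->
  forall x y, f x + ip (gradf x) (vsub y x) <= f y.
Proof.
move=> Hc Hg x y.
set G := ip (gradf x) (vsub y x); set N := vnorm (vsub y x).
have HN := vnorm_ge0 (vsub y x); fold N in HN.
case: (Rle_lt_dec (f x + G) (f y)) => // Hlt; exfalso.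
set eps := (f x + G - f y) / (N + 1).
have Heps : 0 < eps by apply: Rdiv_lt_0_compat; lra.
have [delta [Hd Hdel]] := Hg x eps Heps.
set t := Rmin 1 (delta / (2 * (N + 1))).
have Ht0 : 0 < t by apply: Rmin_pos; [lra| apply: Rdiv_lt_0_compat; lra].
have Ht1 : t <= 1 by apply: Rmin_l.
have Ht2 : t <= delta / (2 * (N + 1)) by apply: Rmin_r.
set p := vadd (vscale t y) (vscale (1 - t) x).
have Hv : forall j, vsub p x j = t * vsub y x j.
  by move=> j; rewrite /p /vsub /vadd /vscale; ring.
have HvN : vnorm (vsub p x) = t * N.
  rewrite (vnorm_ext _ _ Hv) (vnorm_scale t (vsub y x)) Rabs_pos_eq //; lra.
have HvG : ip (gradf x) (vsub p x) = t * G.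
  by rewrite (ip_ext _ (gradf x) _ (fun j => t * vsub y x j)) // ip_scal_r.
have Hsmall : vnorm (vsub p x) < delta.
  rewrite HvN.
  have : t * N <= delta / (2 * (N + 1)) * N by apply: Rmult_le_compat_r.
  have : delta / (2 * (N + 1)) * N < delta.
    apply: (Rmult_lt_reg_r (2 * (N + 1))); first lra.
    have -> : delta / (2 * (N + 1)) * N * (2 * (N + 1)) = delta * N by field; lra.
    nra.
  lra.
have H1 := Hdel p Hsmall.
rewrite HvN HvG in H1.
have H2 := Hc y x t (conj (Rlt_le _ _ Ht0) Ht1); fold p in H2.
have [H3 _] := abs_le_inv _ _ H1.
have H4 : t * G - eps * (t * N) <= t * (f y - f x) by lra.
have H5 : G - eps * N <= f y - f x.
  apply: (Rmult_le_reg_l t) => //; lra.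
have H6 : eps * N < f x + G - f y.
  rewrite /eps.
  have -> : (f x + G - f y) / (N + 1) * N = (f x + G - f y) * (N / (N + 1)) by field; lra.
  have : N / (N + 1) < 1.
    apply: (Rmult_lt_reg_r (N + 1)); first lra.
    have -> : N / (N + 1) * (N + 1) = N by field; lra.
    lra.
  nra.
lra.
Qed.

Lemma deriv_poly2 (a b c : R) :
  derivable_pt_lim (fun s => a * s + b * s * s) c (a + 2 * b * c).
Proof.
move=> eps Heps.
have Hp : 0 < eps / (Rabs b + 1) by apply: Rdiv_lt_0_compat; [lra|have := Rabs_pos b; lra].
exists (mkposreal _ Hp) => h Hh0 /= Hh.
have -> : (a * (c + h) + b * (c + h) * (c + h) - (a * c + b * c * c)) / h - (a + 2 * b * c) = b * h.
  by field.
rewrite Rabs_mult.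
have Hb := Rabs_pos b.
have : Rabs h * (Rabs b + 1) < eps.
  have := Rmult_lt_compat_r (Rabs b + 1) _ _ ltac:(lra) Hh.
  have -> : eps / (Rabs b + 1) * (Rabs b + 1) = eps by field; lra.
  done.
have := Rabs_pos h; nra.
Qed.

Lemma deriv_line {U : finType} (f : (U -> R) -> R) gradf :
  is_gradient f gradf -> forall (y u : U -> R) (t : R),
  derivable_pt_lim (fun s => f (vadd y (vscale s u))) t (ip (gradf (vadd y (vscale t u))) u).
Proof.
move=> Hg y u t eps Heps.
set p := vadd y (vscale t u).
set N := vnorm u.
have HN : 0 <= N by apply: vnorm_ge0.
have He : 0 < eps / (2 * (N + 1)) by apply: Rdiv_lt_0_compat; lra.
have [delta [Hd Hdel]] := Hg p _ He.
have Hp : 0 < delta / (N + 1) by apply: Rdiv_lt_0_compat; lra.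
exists (mkposreal _ Hp) => h Hh0 /= Hh.
set q := vadd y (vscale (t + h) u).
have Hv : forall j, vsub q p j = h * u j.
  by move=> j; rewrite /q /p /vsub /vadd /vscale; ring.
have HvN : vnorm (vsub q p) = Rabs h * N.
  by rewrite (vnorm_ext _ _ Hv) -(vnorm_scale h u).
have HvG : ip (gradf p) (vsub q p) = h * ip (gradf p) u.
  by rewrite (ip_ext _ (gradf p) _ (fun j => h * u j)) // ip_scal_r.
have Hah := Rabs_pos h.
have Hsmall : vnorm (vsub q p) < delta.
  rewrite HvN.
  have := Rmult_lt_compat_r (N + 1) _ _ ltac:(lra) Hh.
  have -> : delta / (N + 1) * (N + 1) = delta by field; lra.
  nra.
have H1 := Hdel q Hsmall.
rewrite HvN HvG in H1.
have Hh' : 0 < Rabs h by apply: Rabs_pos_lt.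
have -> : (f q - f p) / h - ip (gradf p) u = (f q - f p - h * ip (gradf p) u) / h by field.
rewrite /Rdiv Rabs_mult Rabs_inv.
apply: (Rmult_lt_reg_r (Rabs h)) => //.
rewrite Rmult_assoc Rinv_l; last lra.
rewrite Rmult_1_r.
have : eps / (2 * (N + 1)) * (Rabs h * N) < eps * Rabs h.
  have -> : eps / (2 * (N + 1)) * (Rabs h * N) = (eps * Rabs h) * (N / (2 * (N + 1))) by field; lra.
  have : N / (2 * (N + 1)) < 1.
    apply: (Rmult_lt_reg_r (2 * (N + 1))); first lra.
    have -> : N / (2 * (N + 1)) * (2 * (N + 1)) = N by field; lra.
    lra.
  have : 0 < eps * Rabs h by nra.
  nra.
lra.
Qed.

Lemma ip_sub_l {U : finType} (a b c : U -> R) : ip (vsub a b) c = ip a c - ip b c.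
Proof. rewrite /ip -vsum_sub; apply: vsum_ext => j; rewrite /vsub; ring. Qed.

Lemma descent (T : finType) (m : nat) (blk : T -> 'I_m) (f : (T -> R) -> R) gradf
  (i : 'I_m) (Li : R) :
  is_gradient f gradf ->
  (forall (z y : T -> R),
      bnorm blk i (vsub (gradf (vadd z (Uop blk i y))) (gradf z)) <= Li * bnorm blk i y) ->
  forall (y u : T -> R), (forall j, blk j <> i -> u j = 0) ->
  f (vadd y u) <= f y + ip (gradf y) u + Li / 2 * ip u u.
Proof.
move=> Hg HL y u Hu.
set I0 := ip (gradf y) u; set U2 := ip u u.
set F := fun s => f (vadd y (vscale s u)).
set P := fun s => I0 * s + (Li / 2 * U2) * s * s.
have Hd : forall c, 0 <= c <= 1 -> derivable_pt_lim (fun s => F s - P s) c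
   (ip (gradf (vadd y (vscale c u))) u - (I0 + 2 * (Li / 2 * U2) * c)).
  move=> c _.
  exact: (derivable_pt_lim_minus F P c _ _ (deriv_line f gradf Hg y u c) (deriv_poly2 I0 _ c)).
have [c [Hc1 Hc2]] := MVT_cor2 _ _ 0 1 Rlt_0_1 Hd.
have Hsc : forall j, blk j <> i -> vscale c u j = 0.
  by move=> j Hj; rewrite /vscale Hu //; ring.
have HN := vnorm_ge0 u.
have Hneg : ip (gradf (vadd y (vscale c u))) u - (I0 + 2 * (Li / 2 * U2) * c) <= 0.
  rewrite -(Uop_supp _ _ blk i (vscale c u) Hsc).
  set X := 2 * (Li / 2 * U2) * c.
  have -> : forall a, a - (I0 + X) = (a - I0) - X by move=> a; ring.
  have -> : ip (gradf (vadd y (Uop blk i (vscale c u)))) u - I0 =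
            ip (vsub (gradf (vadd y (Uop blk i (vscale c u)))) (gradf y)) u
    by rewrite ip_sub_l.
  rewrite (ip_supp _ _ blk i _ u Hu).
  have H1 := cauchy_schwarz (Uop blk i (vsub (gradf (vadd y (Uop blk i (vscale c u)))) (gradf y))) u.
  rewrite -bnorm_Uop in H1.
  have H2 := HL y (vscale c u).
  rewrite [bnorm blk i (vscale c u)]bnorm_Uop (Uop_supp _ _ blk i _ Hsc) vnorm_scale Rabs_pos_eq in H2; last lra.
  have H3 := Rmult_le_compat_r (vnorm u) _ _ HN H2.
  have H4 := vnorm_sq u; rewrite -/U2 in H4.
  have -> : X = Li * (c * vnorm u) * vnorm u by rewrite /X -H4; field.
  rewrite (Uop_supp _ _ blk i _ Hsc) in H1 *. lra.
have E1 : vadd y (vscale 1 u) = vadd y u.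
  by apply: functional_extensionality => j; rewrite /vadd /vscale; ring.
have E0 : vadd y (vscale 0 u) = y.
  by apply: functional_extensionality => j; rewrite /vadd /vscale; ring.
move: Hc1; rewrite /F /P E1 E0 => Hc1.
nra.
Qed.


Definition bil {U : finType} (M : U -> U -> R) (u v : U -> R) : R :=
  vsum (fun j => vsum (fun j' => u j * M j j' * v j')).

Lemma vsum_exchange {U V : finType} (G : U -> V -> R) :
  vsum (fun j => vsum (fun j' => G j j')) = vsum (fun j' => vsum (fun j => G j j')).
Proof. by rewrite /vsum exchange_big. Qed.

Lemma bil_sym {U : finType} (M : U -> U -> R) (u v : U -> R) :
  (forall j j', M j j' = M j' j) -> bil M v u = bil M u v.
Proof.
move=> HM; rewrite /bil vsum_exchange; apply: vsum_ext => j; apply: vsum_ext => j'.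
rewrite HM; ring.
Qed.

Lemma qform_ext {U : finType} (M : U -> U -> R) (u u' : U -> R) :
  (forall j, u j = u' j) -> qform M u = qform M u'.
Proof.
move=> H; apply: vsum_ext => j; apply: vsum_ext => j'; by rewrite !H.
Qed.

Lemma qform_expand {U : finType} (M : U -> U -> R) (u d : U -> R) (t : R) :
  qform M (fun j => u j + t * d j) = qform M u + t * (bil M u d + bil M d u) + t * t * qform M d.
Proof.
have inner : forall j, vsum (fun j' => (u j + t * d j) * M j j' * (u j' + t * d j')) =
  vsum (fun j' => u j * M j j' * u j') + t * vsum (fun j' => u j * M j j' * d j')
  + t * vsum (fun j' => d j * M j j' * u j') + t * t * vsum (fun j' => d j * M j j' * d j').
  move=> j; rewrite -!vsum_scal -!vsum_add; apply: vsum_ext => j'; ring.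
rewrite /qform (vsum_ext _ _ inner) !vsum_add !vsum_scal /bil; ring.
Qed.

Lemma argmin_opt {U : finType} (c : U -> R) (M : U -> U -> R)
  (Msym : forall s s', M s s' = M s' s) (h : (U -> R) -> ereal) (hconv : convex_efun h)
  (x0 z w : U -> R) (cw : R) :
  h w = EFin cw ->
  (forall v, ele (eplus (EFin (ip c z + / 2 * qform M (fun s => z s - x0 s))) (h z))
                 (eplus (EFin (ip c v + / 2 * qform M (fun s => v s - x0 s))) (h v))) ->
  exists a, h z = EFin a /\
    a - cw <= ip c (vsub w z) + bil M (fun s => z s - x0 s) (vsub w z).
Proof.
move=> Hw Hmin.
have := Hmin w; rewrite Hw.
case Hz: (h z) => [a|] //= Hzw.
exists a; split => //.
set d := vsub w z; set u := fun s => z s - x0 s.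
set K := ip c d + bil M u d.
have Ht : forall t, 0 < t <= 1 -> a - cw <= K + t / 2 * qform M d.
  move=> t Ht.
  have := hconv w z t cw a ltac:(lra) Hw Hz.
  set vt := vadd (vscale t w) (vscale (1 - t) z).
  case Hv: (h vt) => [b|] //= Hb.
  have := Hmin vt; rewrite Hz Hv /= => H.
  have E1 : ip c vt = ip c z + t * ip c d.
    rewrite -ip_scal_r /ip -vsum_add; apply: vsum_ext => j.
    rewrite /vt /d /vadd /vscale /vsub; ring.
  have E2 : qform M (fun s => vt s - x0 s) = qform M u + t * (bil M u d + bil M d u) + t * t * qform M d.
    rewrite -qform_expand; apply: qform_ext => j.
    rewrite /vt /u /d /vadd /vscale /vsub; ring.
  rewrite E1 E2 (bil_sym M u d Msym) in H.
  have : t * (a - cw) <= t * (K + t / 2 * qform M d).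
    rewrite /K; rewrite -/u in H; lra.
  move=> H2; apply: (Rmult_le_reg_l t) => //; lra.
set Q := qform M d.
case: (Rle_lt_dec (a - cw) K) => // HK.
set t := Rmin 1 ((a - cw - K) / (Rabs Q + 1)).
have HQ := Rabs_pos Q.
have Ht0 : 0 < t by apply: Rmin_pos; [lra| apply: Rdiv_lt_0_compat; lra].
have Ht1 : t <= 1 by apply: Rmin_l.
have Ht2 : t <= (a - cw - K) / (Rabs Q + 1) by apply: Rmin_r.
have H := Ht t (conj Ht0 Ht1).
have HQ2 : Q <= Rabs Q by apply: Rle_abs.
have : t * (Rabs Q + 1) <= a - cw - K.
  have := Rmult_le_compat_r (Rabs Q + 1) _ _ ltac:(lra) Ht2.
  have -> : (a - cw - K) / (Rabs Q + 1) * (Rabs Q + 1) = a - cw - K by field; lra.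
  done.
have : t * Q <= t * Rabs Q by apply: Rmult_le_compat_l; lra.
move=> H5 H6; rewrite -/Q in H; lra.
Qed.


Lemma restr_eq (T : finType) (m : nat) (blk : T -> 'I_m) (i : 'I_m) (z y : T -> R) :
  (forall j, blk j = i -> z j = y j) -> restr blk i z = restr blk i y.
Proof.
move=> H; apply: functional_extensionality => -[j Hj] /=; rewrite /restr /=.
by apply: H; apply/eqP.
Qed.

Lemma Fval_step (T : finType) (m : nat) (blk : T -> 'I_m) f g (i : 'I_m) (z y : T -> R) :
  (forall j, blk j <> i -> z j = y j) ->
  Fval blk f g z = Fval blk f g y - f y + f z - efin_val (g i (restr blk i y))
                   + efin_val (g i (restr blk i z)).
Proof.
move=> H.
have D1 : forall F : 'I_m -> R, \big[Rplus/0]_(i0 < m) F i0 =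
    F i + \big[Rplus/0]_(i0 < m | i0 != i) F i0 by move=> F; rewrite (bigD1 i).
rewrite /Fval D1 [X in _ = _ + X - _ + _ - _ + _]D1.
have -> : \big[Rplus/0]_(i0 < m | i0 != i) efin_val (g i0 (restr blk i0 z)) =
          \big[Rplus/0]_(i0 < m | i0 != i) efin_val (g i0 (restr blk i0 y)).
  apply: eq_bigr => i' Hi'; rewrite (restr_eq _ _ blk i' z y) // => j Hj.
  apply: H => Hji; move: Hi'; by rewrite -Hj Hji eqxx.
ring.
Qed.

Lemma bsum_vsum_exch (T U : finType) (m : nat) (blk : T -> 'I_m) (i : 'I_m) (G : U -> T -> R) :
  bsum blk i (fun j => vsum (fun l => G l j)) = vsum (fun l => bsum blk i (fun j => G l j)).
Proof. by rewrite /bsum /vsum exchange_big. Qed.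

Lemma vsum_part_exch (T U : finType) (m : nat) (blk : T -> 'I_m) (G : U -> T -> R) :
  \big[Rplus/0]_(i < m) vsum (fun l => bsum blk i (fun j => G l j)) =
  vsum (fun l => vsum (fun j => G l j)).
Proof.
transitivity (vsum (fun l => \big[Rplus/0]_(i < m) bsum blk i (fun j => G l j))).
  by rewrite /vsum exchange_big.
by apply: vsum_ext => l; rewrite (vsum_part T m blk).
Qed.

Lemma Pfull_sym (T : finType) (m : nat) (blk : T -> 'I_m) (Pb : 'I_m -> T -> T -> R) :
  (forall i j j', blk j = i -> blk j' = i -> Pb i j j' = Pb i j' j) ->
  forall j j', Pfull blk Pb j j' = Pfull blk Pb j' j.
Proof.
move=> H j j'; rewrite /Pfull eq_sym; case: eqP => // E.
by rewrite E; apply: H.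
Qed.

Lemma bil_Pfull_supp (T : finType) (m : nat) (blk : T -> 'I_m) (Pb : 'I_m -> T -> T -> R)
  (i : 'I_m) (D V : T -> R) :
  (forall j, blk j <> i -> D j = 0) ->
  bil (Pfull blk Pb) D V = bsum blk i (fun j => bsum blk i (fun j' => D j * Pb i j j' * V j')).
Proof.
move=> HD; rewrite /bil (vsum_supp T m blk i); last first.
  by move=> j Hj; rewrite -(@vsum_zero T); apply: vsum_ext => j'; rewrite HD //; ring.
apply: bsum_ext => j Hj; rewrite bsum_mkcond; apply: vsum_ext => j'.
rewrite /Pfull Hj eq_sym; case: eqP => // _; ring.
Qed.

Lemma bil_blk (T : finType) (m : nat) (blk : T -> 'I_m) (Pb : 'I_m -> T -> T -> R)
  (i : 'I_m) (D V : T -> R) :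
  bil (fun s s' : Blk blk i => Pb i (proj1_sig s) (proj1_sig s'))
      (fun s => D (proj1_sig s)) (fun s => V (proj1_sig s)) =
  bsum blk i (fun j => bsum blk i (fun j' => D j * Pb i j j' * V j')).
Proof.
rewrite /bil /vsum -blk_sum; apply: eq_bigr => s _.
by rewrite -(blk_sum T m blk i (fun j' => D (proj1_sig s) * Pb i (proj1_sig s) j' * V j')).
Qed.

Lemma vsum_D1 (U : finType) (F : U -> R) (j : U) :
  vsum F = F j + \big[Rplus/0]_(j' | j' != j) F j'.
Proof. by rewrite /vsum (bigD1 j). Qed.

Lemma qform_L_supp (T : finType) (m : nat) (blk : T -> 'I_m) (Lb : 'I_m -> R) (i : 'I_m)
  (D : T -> R) :
  (forall j, blk j <> i -> D j = 0) -> qform (Lmat blk Lb) D = Lb i * ip D D.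
Proof.
move=> HD; rewrite /qform /ip -vsum_scal; apply: vsum_ext => j.
rewrite (vsum_D1 _ _ j) big1; last first.
  by move=> j' Hj'; rewrite /Lmat eq_sym (negbTE Hj'); ring.
rewrite /Lmat eqxx.
case: (eqVneq (blk j) i) => [->|Hj]; first ring.
rewrite HD; [ring|by apply/eqP].
Qed.

Lemma qform_I (T : finType) (D : T -> R) : qform Imat D = ip D D.
Proof.
rewrite /qform /ip; apply: vsum_ext => j.
rewrite (vsum_D1 _ _ j) big1; last first.
  by move=> j' Hj'; rewrite /Imat eq_sym (negbTE Hj'); ring.
rewrite /Imat eqxx; ring.
Qed.

Lemma qform_AtA (T : finType) (q : nat) (A : 'I_q -> T -> R) (D : T -> R) :
  qform (AtA A) D = ip (Amul A D) (Amul A D).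
Proof.
rewrite /qform /ip /Amul /AtA.
have E : forall j, vsum (fun j' => D j * vsum (fun r => A r j * A r j') * D j') =
   vsum (fun r => vsum (fun j' => (A r j * D j) * (A r j' * D j'))).
  move=> j; rewrite vsum_exchange; apply: vsum_ext => j'.
  rewrite (vsum_ext (fun r => (A r j * D j) * (A r j' * D j')) (fun r => (D j * D j') * (A r j * A r j'))); last by move=> r; ring.
  rewrite vsum_scal; ring.
rewrite (vsum_ext _ _ E) vsum_exchange; apply: vsum_ext => r.
rewrite -vsum_scal vsum_exchange; apply: vsum_ext => j'.
rewrite (vsum_ext _ (fun j => A r j' * D j' * (A r j * D j))); last by move=> j; ring.
rewrite vsum_scal; ring.
Qed.

Lemma qform_lin4 (U : finType) (M1 M2 M3 M4 : U -> U -> R) (c d : R) (D : U -> R) :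
  qform (fun j j' => M1 j j' - M2 j j' - c * M3 j j' - d * M4 j j') D =
  qform M1 D - qform M2 D - c * qform M3 D - d * qform M4 D.
Proof.
rewrite /qform -!vsum_scal -!vsum_sub; apply: vsum_ext => j.
rewrite -!vsum_scal -!vsum_sub; apply: vsum_ext => j'; ring.
Qed.


Definition Usum {T : finType} (u : nat -> T -> R) (s : seq nat) : T -> R :=
  fun j => \big[Rplus/0]_(e <- s) u e j.
Definition Nsum {T : finType} (u : nat -> T -> R) (s : seq nat) : R :=
  \big[Rplus/0]_(e <- s) vnorm (u e).

Lemma Usum_cons {T : finType} (u : nat -> T -> R) e s j : Usum u (e :: s) j = u e j + Usum u s j.
Proof. by rewrite /Usum big_cons. Qed.
Lemma Nsum_cons {T : finType} (u : nat -> T -> R) e s : Nsum u (e :: s) = vnorm (u e) + Nsum u s.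
Proof. by rewrite /Nsum big_cons. Qed.
Lemma Nsum_ge0 {T : finType} (u : nat -> T -> R) s : 0 <= Nsum u s.
Proof. apply: bigR_ge0 => e _; apply: vnorm_ge0. Qed.

Lemma vnorm_Usum {T : finType} (u : nat -> T -> R) s : vnorm (Usum u s) <= Nsum u s.
Proof.
elim: s => [|e s IH].
  rewrite /Nsum big_nil (vnorm_ext _ (fun _ => 0)); last by move=> j; rewrite /Usum big_nil.
  by rewrite /vnorm /ip (vsum_ext _ (fun _ => 0)) ?vsum_zero ?sqrt_0; [lra|move=> j; ring].
rewrite (vnorm_ext _ _ (Usum_cons u e s)) Nsum_cons.
have := vnorm_triangle (u e) (Usum u s); lra.
Qed.

Lemma vadd_cons {T : finType} (u : nat -> T -> R) e s (y : T -> R) :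
  vadd y (Usum u (e :: s)) = vadd (vadd y (u e)) (Usum u s).
Proof. apply: functional_extensionality => j; rewrite /vadd Usum_cons; ring. Qed.

Lemma vadd_nil {T : finType} (u : nat -> T -> R) (y : T -> R) : vadd y (Usum u [::]) = y.
Proof. apply: functional_extensionality => j; rewrite /vadd /Usum big_nil; ring. Qed.

Lemma ip_zero_r {U : finType} (a : U -> R) : ip a (fun _ => 0) = 0.
Proof. rewrite /ip (vsum_ext _ (fun _ => 0)); [exact: vsum_zero|move=> j; ring]. Qed.

Lemma lip_step (T : finType) (m : nat) (blk : T -> 'I_m) (gradf : (T -> R) -> T -> R) (Lr : R) (i : 'I_m) (y v : T -> R) :
  (forall i (z y : T -> R),
      vnorm (vsub (gradf (vadd z (Uop blk i y))) (gradf z)) <= Lr * bnorm blk i y) ->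
  (forall j, blk j <> i -> v j = 0) ->
  vnorm (vsub (gradf (vadd y v)) (gradf y)) <= Lr * vnorm v.
Proof.
move=> HL Hv; have := HL i y v.
by rewrite bnorm_Uop (Uop_supp _ _ blk i v Hv).
Qed.

Lemma path_grad (T : finType) (m : nat) (blk : T -> 'I_m) (gradf : (T -> R) -> T -> R) (Lr : R)
  (u : nat -> T -> R) (bi : nat -> 'I_m) :
  (forall i (z y : T -> R),
      vnorm (vsub (gradf (vadd z (Uop blk i y))) (gradf z)) <= Lr * bnorm blk i y) ->
  forall s, (forall e, e \in s -> forall j, blk j <> bi e -> u e j = 0) ->
  forall y0, vnorm (vsub (gradf (vadd y0 (Usum u s))) (gradf y0)) <= Lr * Nsum u s.
Proof.
move=> HL; elim => [|e s IH] Hs y0.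
  rewrite vadd_nil /Nsum big_nil (vnorm_ext _ (fun _ => 0)); last by move=> j; rewrite /vsub; ring.
  by rewrite /vnorm /ip (vsum_ext _ (fun _ => 0)) ?vsum_zero ?sqrt_0; [lra|move=> j; ring].
rewrite vadd_cons Nsum_cons.
set y1 := vadd y0 (u e).
have Hs' : forall e', e' \in s -> forall j, blk j <> bi e' -> u e' j = 0.
  by move=> e' He'; apply: Hs; rewrite in_cons He' orbT.
have H1 := IH Hs' y1.
have H2 := lip_step T m blk gradf Lr (bi e) y0 (u e) HL (Hs e (mem_head e s)).
have H3 := vnorm_triangle (vsub (gradf (vadd y1 (Usum u s))) (gradf y1)) (vsub (gradf y1) (gradf y0)).
rewrite (vnorm_ext (vsub (gradf (vadd y1 (Usum u s))) (gradf y0))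
  (fun j => vsub (gradf (vadd y1 (Usum u s))) (gradf y1) j + vsub (gradf y1) (gradf y0) j)); last first.
  by move=> j; rewrite /vsub; ring.
rewrite /y1 in H1 H2 H3 *; lra.
Qed.

Lemma path_f (T : finType) (m : nat) (blk : T -> 'I_m) (f : (T -> R) -> R) (gradf : (T -> R) -> T -> R) (Lb : 'I_m -> R) (Lr : R)
  (u : nat -> T -> R) (bi : nat -> 'I_m) :
  is_gradient f gradf ->
  (forall i (z y : T -> R),
      bnorm blk i (vsub (gradf (vadd z (Uop blk i y))) (gradf z)) <= Lb i * bnorm blk i y) ->
  (forall i (z y : T -> R),
      vnorm (vsub (gradf (vadd z (Uop blk i y))) (gradf z)) <= Lr * bnorm blk i y) ->
  forall s, (forall e, e \in s -> forall j, blk j <> bi e -> u e j = 0) ->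
  forall y0, f (vadd y0 (Usum u s)) - f y0 - ip (gradf y0) (Usum u s) <=
    / 2 * \big[Rplus/0]_(e <- s) (Lb (bi e) * ip (u e) (u e))
    + Lr / 2 * (Nsum u s * Nsum u s - \big[Rplus/0]_(e <- s) ip (u e) (u e)).
Proof.
move=> Hg HLb HL; elim => [|e s IH] Hs y0.
  rewrite vadd_nil /Nsum !big_nil (ip_ext _ (gradf y0) _ (fun _ => 0)) ?ip_zero_r //; last first.
    by move=> j; rewrite /Usum big_nil.
  lra.
have Hse := Hs e (mem_head e s).
rewrite vadd_cons Nsum_cons !big_cons.
set y1 := vadd y0 (u e).
have Hs' : forall e', e' \in s -> forall j, blk j <> bi e' -> u e' j = 0.
  by move=> e' He'; apply: Hs; rewrite in_cons He' orbT.
have H1 := IH Hs' y1.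
have H2 := descent T m blk f gradf (bi e) (Lb (bi e)) Hg (HLb (bi e)) y0 (u e) Hse.
have H3 := lip_step T m blk gradf Lr (bi e) y0 (u e) HL Hse.
have H4 := cauchy_schwarz (vsub (gradf y1) (gradf y0)) (Usum u s).
have H5 := vnorm_Usum u s.
have H6 := vnorm_ge0 (vsub (gradf y1) (gradf y0)).
have H7 := vnorm_ge0 (Usum u s).
have H8 : vnorm (vsub (gradf y1) (gradf y0)) * vnorm (Usum u s) <=
          Lr * vnorm (u e) * Nsum u s.
  apply: Rmult_le_compat => //.
have E1 : ip (gradf y0) (Usum u (e :: s)) = ip (gradf y0) (u e) + ip (gradf y0) (Usum u s).
  rewrite /ip -vsum_add; apply: vsum_ext => j; rewrite Usum_cons; ring.
have E2 : ip (vsub (gradf y1) (gradf y0)) (Usum u s) = ip (gradf y1) (Usum u s) - ip (gradf y0) (Usum u s).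
  by rewrite ip_sub_l.
have E3 := vnorm_sq (u e).
rewrite E1; rewrite /y1 in H1 H2 H3 H4 H8 E2 *.
nra.
Qed.


Lemma seq_cs (s : seq nat) (a : nat -> R) :
  (\big[Rplus/0]_(e <- s) a e) * (\big[Rplus/0]_(e <- s) a e) <=
  INR (size s) * \big[Rplus/0]_(e <- s) (a e * a e).
Proof.
elim: s => [|e s IH]; first by rewrite !big_nil /=; lra.
rewrite !big_cons (_ : INR (size (e :: s)) = INR (size s) + 1); last by rewrite -S_INR.
set N := \big[Rplus/0]_(e0 <- s) a e0 in IH *.
set S := \big[Rplus/0]_(e0 <- s) (a e0 * a e0) in IH *.
set n := INR (size s) in IH *.
have Hn : 0 <= n by apply: pos_INR.
have HS : 0 <= S by apply: bigR_ge0 => ? _; nra.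
have Hkey : 2 * a e * N <= n * (a e * a e) + S.
  case: (Req_dec n 0) => Hn0.
    rewrite Hn0 in IH; have : N * N <= 0 by lra.
    move=> HNN; have -> : N = 0 by nra.
    nra.
  have Hnp : 0 < n by lra.
  have Hsq := Rle_0_sqr (n * a e - N); rewrite /Rsqr in Hsq.
  have E : n * (n * (a e * a e) + S) - n * (2 * a e * N) = (n * a e - N) * (n * a e - N) + (n * S - N * N) by ring.
  apply: (Rmult_le_reg_l n) => //; lra.
nra.
Qed.

Lemma filter_le (s : seq nat) (P : pred nat) (F : nat -> R) :
  (forall e, 0 <= F e) ->
  \big[Rplus/0]_(e <- s | P e) F e <= \big[Rplus/0]_(e <- s) F e.
Proof.
move=> H; rewrite big_mkcond; apply: bigR_le => e _.
by case: (P e); [apply: Rle_refl | apply: H].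
Qed.

Lemma Lc_ge (m : nat) (Lb : 'I_m -> R) (i : 'I_m) : Lb i <= Lc Lb.
Proof.
rewrite /Lc.
have : i \in index_enum 'I_m by apply: mem_index_enum.
elim: (index_enum 'I_m) => [|a s IH] //=.
rewrite in_cons big_cons => /orP [/eqP ->|Hi]; first by apply: Rmax_l.
apply: Rle_trans (IH Hi) _; apply: Rmax_r.
Qed.

Lemma Lr_neg (T : finType) (m : nat) (blk : T -> 'I_m) (gradf : (T -> R) -> T -> R) (Lr : R) :
  (forall i (z y : T -> R),
      vnorm (vsub (gradf (vadd z (Uop blk i y))) (gradf z)) <= Lr * bnorm blk i y) ->
  Lr < 0 -> forall u : T -> R, ip u u = 0.
Proof.
move=> HL HLr u.
have Hb : forall i, bsum blk i (fun j => u j ^ 2) = 0.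
  move=> i; have := HL i u u; have := vnorm_ge0 (vsub (gradf (vadd u (Uop blk i u))) (gradf u)).
  have := sqrt_pos (bsum blk i (fun j => u j ^ 2)); rewrite /bnorm => H1 H2 H3.
  have H4 : sqrt (bsum blk i (fun j => u j ^ 2)) = 0 by nra.
  have H5 : 0 <= bsum blk i (fun j => u j ^ 2) by apply: bigR_ge0 => j _; nra.
  by apply: sqrt_eq_0.
rewrite /ip (vsum_part T m blk) big1 // => i _.
rewrite -(Hb i); apply: bsum_ext => j _; ring.
Qed.

Lemma r_invariant (T : finType) (m q : nat) (blk : T -> 'I_m) (A : 'I_q -> T -> R)
  (b : 'I_q -> R) (xs : nat -> T -> R) (rs : nat -> 'I_q -> R) (idx : nat -> 'I_m) (k : nat) :
  (forall l, rs O l = Amul A (xs O) l - b l) ->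
  (forall d, (d < k)%nat ->
      (forall j, blk j <> idx d -> xs (S d) j = xs d j) /\
      (forall l, rs (S d) l = r_next blk A (idx d) (xs d) (xs (S d)) (rs d) l)) ->
  forall d, (d <= k)%nat -> forall l, rs d l = Amul A (xs d) l - b l.
Proof.
move=> H0 Hs; elim => [|d IH] Hd l; first exact: H0.
have [Hsupp Hr] := Hs d Hd.
rewrite Hr /r_next IH ?(ltnW Hd) //.
have : Amul A (xs d.+1) l - Amul A (xs d) l = bsum blk (idx d) (fun j => A l j * (xs d.+1 j - xs d j)).
  rewrite /Amul -vsum_sub (vsum_supp T m blk (idx d)).
    by apply: bsum_ext => j _; ring.
  by move=> j Hj; rewrite Hsupp //; ring.
lra.
Qed.


Lemma bil_lin2 {U : finType} (M : U -> U -> R) (D V W : U -> R) :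
  bil M D (fun j => - V j - W j) = - bil M D V - bil M D W.
Proof.
rewrite /bil -vsum_opp -vsum_sub; apply: vsum_ext => j.
rewrite -vsum_opp -vsum_sub; apply: vsum_ext => j'; ring.
Qed.

Lemma bigR_opp (I : Type) (r : seq I) (P : pred I) (F : I -> R) :
  \big[Rplus/0]_(j <- r | P j) (- F j) = - \big[Rplus/0]_(j <- r | P j) F j.
Proof.
rewrite (bigR_ext _ _ _ _ (fun j => (-1) * F j)); last by move=> j; ring.
rewrite bigR_scal; ring.
Qed.

Lemma bigR_sub (I : Type) (r : seq I) (P : pred I) (F G : I -> R) :
  \big[Rplus/0]_(j <- r | P j) (F j - G j) =
  \big[Rplus/0]_(j <- r | P j) F j - \big[Rplus/0]_(j <- r | P j) G j.
Proof.
rewrite (bigR_ext _ _ _ _ (fun j => F j + - G j)) // bigR_add bigR_opp; ring.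
Qed.

Lemma perI (T : finType) (m q : nat) (blk : T -> 'I_m)
  (f : (T -> R) -> R) (gradf : (T -> R) -> T -> R)
  (g : forall i : 'I_m, (Blk blk i -> R) -> ereal)
  (A : 'I_q -> T -> R) (Lb : 'I_m -> R) (Pb : 'I_m -> T -> T -> R)
  (beta rho alpha LC : R) (i : 'I_m)
  (xk hat : T -> R) (lam r : 'I_q -> R) (z x : T -> R) :
  is_gradient f gradf ->
  (forall (z y : T -> R),
      bnorm blk i (vsub (gradf (vadd z (Uop blk i y))) (gradf z)) <= Lb i * bnorm blk i y) ->
  convex_efun (g i) ->
  (forall i j j', blk j = i -> blk j' = i -> Pb i j j' = Pb i j' j) ->
  0 < alpha * LC ->
  x_step blk gradf g A Pb beta i xk hat lam r z ->
  g i (restr blk i x) <> EInf ->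
  let r1 := r_next blk A i xk z r in
  let lam1 := lam_next rho lam r1 in
  let P := Pfull blk Pb in
  let L := Lmat blk Lb in
  let M := fun j j' : T => P j j' - L j j' - alpha * LC * Imat j j' - beta * AtA A j j' in
  Fval blk f g z - Fval blk f g x - ip lam1 r1 + (beta - rho) * ip r1 r1 - beta / 2 * ip r1 r1
    + / 2 * qform P (vsub z x) + / 2 * qform M (vsub z xk)
  <= (Fval blk f g xk - Fval blk f g x - ip lam r + beta * ip r r) - beta / 2 * ip r r
     + / 2 * qform P (vsub xk x)
     + / (2 * (alpha * LC)) * bsum blk i (fun j => (gradf xk j - gradf hat j) * (gradf xk j - gradf hat j))
     + efin_val (g i (restr blk i x)) - efin_val (g i (restr blk i xk))
     - bsum blk i (fun j => gradf hat j * (xk j - x j))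
     + vsum (fun l => (lam l - beta * r l) * bsum blk i (fun j => A l j * (xk j - x j))).
Proof.
move=> Hg HLb Hconv Hsym Hc [Hsupp Hmin] Hx r1 lam1 P L M.
set D := vsub z xk; set e := vsub xk x.
have HD : forall j, blk j <> i -> D j = 0.
  by move=> j Hj; rewrite /D /vsub Hsupp; [ring|apply/eqP].
have Hz : forall j, blk j <> i -> z j = xk j by move=> j Hj; apply: Hsupp; apply/eqP.
have Ea := Fval_step T m blk f g i z xk Hz.
have Eb : f z <= f xk + ip (gradf xk) D + Lb i / 2 * ip D D.
  have := descent T m blk f gradf i (Lb i) Hg HLb xk D HD.
  have -> : vadd xk D = z by apply: functional_extensionality => j; rewrite /vadd /D /vsub; ring.
  done.
case Hgx : (g i (restr blk i x)) => [cw|]; last by [].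
set mu := fun l => lam l - beta * r l.
set W := fun j => vsum (fun l => A l j * mu l).
have [a [Hga Hopt]] := @argmin_opt (Blk blk i)
   (fun s => gradf hat (proj1_sig s) - vsum (fun l => A l (proj1_sig s) * (lam l - beta * r l)))
   (fun s s' => Pb i (proj1_sig s) (proj1_sig s'))
   (fun s s' => Hsym i _ _ (eqP (proj2_sig s)) (eqP (proj2_sig s')))
   (g i) Hconv (restr blk i xk) (restr blk i z) (restr blk i x) cw Hgx Hmin.
have E1 : ip (fun s : Blk blk i => gradf hat (proj1_sig s) - vsum (fun l => A l (proj1_sig s) * (lam l - beta * r l)))
    (vsub (restr blk i x) (restr blk i z)) = bsum blk i (fun j => (gradf hat j - W j) * (x j - z j)).
  exact: (blk_sum T m blk i (fun j => (gradf hat j - W j) * (x j - z j))).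
have E2 : bil (fun s s' : Blk blk i => Pb i (proj1_sig s) (proj1_sig s'))
    (fun s => restr blk i z s - restr blk i xk s) (vsub (restr blk i x) (restr blk i z)) =
    bil P D (fun j => - e j - D j).
  rewrite (bil_Pfull_supp T m blk Pb i D _ HD).
  rewrite -(bil_blk T m blk Pb i D (fun j => - e j - D j)).
  by apply: vsum_ext => s; apply: vsum_ext => s'; rewrite /restr /D /e /vsub; ring.
rewrite E1 E2 bil_lin2 in Hopt.
change (bil P D D) with (qform P D) in Hopt.
set gk := gradf xk; set gh := gradf hat.
set AD := fun l => bsum blk i (fun j => A l j * (z j - xk j)).
set AE := fun l => bsum blk i (fun j => A l j * (xk j - x j)).
have E3 : bsum blk i (fun j => (gh j - W j) * (x j - z j)) =
    vsum (fun l => mu l * (AD l + AE l)) - bsum blk i (fun j => gh j * D j)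
    - bsum blk i (fun j => gh j * e j).
  rewrite (bsum_ext _ _ blk i _ (fun j => vsum (fun l => A l j * mu l * (D j + e j)) - gh j * D j - gh j * e j)); last first.
    move=> j _; rewrite /W.
    rewrite (vsum_ext (fun l => A l j * mu l * (D j + e j)) (fun l => (D j + e j) * (A l j * mu l))); last by move=> l; ring.
    rewrite vsum_scal /D /e /vsub; ring.
  rewrite /bsum !bigR_sub -/(bsum blk i _) bsum_vsum_exch; congr (_ - _ - _).
  apply: vsum_ext => l; rewrite /AD /AE /bsum -bigR_add -bigR_scal.
  apply: bigR_ext => j; rewrite /D /e /vsub; ring.
rewrite E3 in Hopt.
have E4 : vsum (fun l => mu l * (AD l + AE l)) = ip lam AD - beta * ip r AD
    + vsum (fun l => (lam l - beta * r l) * bsum blk i (fun j => A l j * (xk j - x j))).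
  rewrite (vsum_ext _ (fun l => lam l * AD l + (- beta) * (r l * AD l) + (lam l - beta * r l) * bsum blk i (fun j => A l j * (xk j - x j)))); last by move=> l; rewrite /mu /AE; ring.
  rewrite !vsum_add vsum_scal /ip; ring.
have E5 : ip r1 r1 = ip r r + 2 * ip r AD + ip AD AD.
  rewrite /ip (vsum_ext _ (fun l => r l * r l + 2 * (r l * AD l) + AD l * AD l)); last by move=> l; rewrite /r1 /r_next /AD; ring.
  by rewrite !vsum_add vsum_scal.
have E6 : ip lam1 r1 = ip lam r + ip lam AD - rho * ip r1 r1.
  rewrite /ip (vsum_ext _ (fun l => lam l * r l + lam l * AD l + (- rho) * (r1 l * r1 l))); last by move=> l; rewrite /lam1 /lam_next /r1 /r_next /AD; ring.
  rewrite !vsum_add vsum_scal; ring.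
have Psym := Pfull_sym T m blk Pb Hsym.
have E7 : qform P (vsub z x) = qform P e + 2 * bil P D e + qform P D.
  rewrite (qform_ext P (vsub z x) (fun j => e j + 1 * D j)); last by move=> j; rewrite /e /D /vsub; ring.
  rewrite qform_expand (bil_sym P D e Psym); ring.
have HAD : forall l, Amul A D l = AD l.
  move=> l; rewrite /Amul (vsum_supp T m blk i); last by move=> j Hj; rewrite HD //; ring.
  by apply: bsum_ext => j _.
have E8 : qform M D = qform P D - Lb i * ip D D - alpha * LC * ip D D - beta * ip AD AD.
  rewrite /M qform_lin4 (qform_L_supp T m blk Lb i D HD) qform_I qform_AtA.
  by rewrite (ip_ext _ AD _ AD HAD HAD).
have E9 : ip gk D = bsum blk i (fun j => gk j * D j).
  by rewrite /ip (vsum_supp T m blk i) // => j Hj; rewrite HD //; ring.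
have E10 : ip D D = bsum blk i (fun j => D j * D j).
  by rewrite /ip (vsum_supp T m blk i) // => j Hj; rewrite HD //; ring.
have E11 : bsum blk i (fun j => gk j * D j) - bsum blk i (fun j => gh j * D j) <=
    alpha * LC / 2 * ip D D + / (2 * (alpha * LC)) * bsum blk i (fun j => (gk j - gh j) * (gk j - gh j)).
  rewrite E10 /bsum -bigR_sub -!bigR_scal -bigR_add; apply: bigR_le => j _.
  have := young (D j) (gk j - gh j) (alpha * LC) Hc.
  lra.
have E12 : bsum blk i (fun j => gh j * e j) = bsum blk i (fun j => gh j * (xk j - x j)) by [].
rewrite Hga in Ea.
change (efin_val (EFin a)) with a in Ea.
change (efin_val (EFin cw)) with cw.
rewrite Ea E6 E5 E7 E8.
rewrite E4 E12 in Hopt.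
rewrite E9 in Eb.
lra.
Qed.


Lemma qform_L_ge0 (T : finType) (m : nat) (blk : T -> 'I_m) (Lb : 'I_m -> R) (u : T -> R) :
  (forall i, 0 < Lb i) -> 0 <= qform (Lmat blk Lb) u.
Proof.
move=> HL; apply: vsum_ge0 => j.
rewrite (vsum_D1 _ _ j) big1; last first.
  by move=> j' Hj'; rewrite /Lmat eq_sym (negbTE Hj'); ring.
rewrite /Lmat eqxx; have := HL (blk j); nra.
Qed.

Lemma global_bound (T : finType) (m : nat) (blk : T -> 'I_m)
  (f : (T -> R) -> R) (gradf : (T -> R) -> T -> R) (Lb : 'I_m -> R) (Lr : R)
  (idx : nat -> 'I_m) (xs : nat -> T -> R) (tau k : nat) (hat x : T -> R) (alpha LC : R) :
  convex_fun f -> is_gradient f gradf ->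
  (forall i, 0 < Lb i) ->
  (forall i (z y : T -> R),
      bnorm blk i (vsub (gradf (vadd z (Uop blk i y))) (gradf z)) <= Lb i * bnorm blk i y) ->
  (forall i (z y : T -> R),
      vnorm (vsub (gradf (vadd z (Uop blk i y))) (gradf z)) <= Lr * bnorm blk i y) ->
  0 < alpha -> 0 < LC ->
  (forall d, (d < k)%nat -> forall j, blk j <> idx d -> xs (S d) j = xs d j) ->
  bounded_delay tau xs hat k ->
  / (2 * (alpha * LC)) * ip (fun j => gradf (xs k) j - gradf hat j) (fun j => gradf (xs k) j - gradf hat j)
  - ip (gradf hat) (vsub (xs k) x)
  <= f x - f (xs k)
     + (Lr / LC * Lr * INR tau / alpha + 2 * Lr * INR tau) / 2
       * \big[Rplus/0]_(k - tau <= d < k) ip (vsub (xs (S d)) (xs d)) (vsub (xs (S d)) (xs d))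
     + / 2 * \big[Rplus/0]_(k - tau <= d < k) qform (Lmat blk Lb) (vsub (xs (S d)) (xs d)).
Proof.
move=> Hc Hg HLb0 HLb HLr Ha HLC Hstep [J HJ].
set u := fun e => vsub (xs (S e)) (xs e).
set s := [seq e <- index_iota (k - tau) k | J e].
set Sd := \big[Rplus/0]_(k - tau <= d < k) ip (vsub (xs (S d)) (xs d)) (vsub (xs (S d)) (xs d)).
set SLd := \big[Rplus/0]_(k - tau <= d < k) qform (Lmat blk Lb) (vsub (xs (S d)) (xs d)).
have Hlt : forall e, e \in s -> (e < k)%nat.
  by move=> e; rewrite mem_filter mem_index_iota => /andP [_ /andP [_ ->]].
have Hs : forall e, e \in s -> forall j, blk j <> idx e -> u e j = 0.
  by move=> e He j Hj; rewrite /u /vsub Hstep ?Hlt //; ring.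
have Hxk : vadd hat (Usum u s) = xs k.
  apply: functional_extensionality => j; rewrite /vadd HJ /Usum /s big_filter.
  rewrite (bigR_ext _ _ _ (fun e => xs e j - xs e.+1 j) (fun e => - u e j)); last first.
    by move=> e; rewrite /u /vsub; ring.
  rewrite bigR_opp; ring.
set gh := gradf hat; set gk := gradf (xs k).
have Hpf := path_f T m blk f gradf Lb Lr u idx Hg HLb HLr s Hs hat.
have Hpg := path_grad T m blk gradf Lr u idx HLr s Hs hat.
rewrite Hxk in Hpf Hpg.
have Hgi := grad_ineq f gradf Hc Hg hat x.
have E1 : ip gh (vsub (xs k) x) = ip gh (Usum u s) - ip gh (vsub x hat).
  rewrite /ip -vsum_sub; apply: vsum_ext => j.
  have := f_equal (fun v => v j) Hxk; rewrite /vadd /vsub => <-; ring.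
set N := Nsum u s.
set Ss := \big[Rplus/0]_(e <- s) ip (u e) (u e).
set SLs := \big[Rplus/0]_(e <- s) (Lb (idx e) * ip (u e) (u e)).
have HSs0 : 0 <= Ss by apply: bigR_ge0 => e _; apply: ip_ge0.
have HS0 : 0 <= Sd by apply: bigR_ge0 => e _; apply: ip_ge0.
have HSs : Ss <= Sd.
  rewrite /Ss /s big_filter; apply: filter_le => e; apply: ip_ge0.
have HSLs : SLs <= SLd.
  have -> : SLs = \big[Rplus/0]_(e <- s) qform (Lmat blk Lb) (u e).
    rewrite /SLs big_seq [RHS]big_seq; apply: eq_bigr => e He.
    by rewrite (qform_L_supp T m blk Lb (idx e) (u e) (Hs e He)).
  rewrite /s big_filter; apply: filter_le => e; apply: qform_L_ge0 HLb0.
have HN : N * N <= INR (size s) * Ss.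
  have := seq_cs s (fun e => vnorm (u e)).
  rewrite (bigR_ext _ _ _ (fun e => vnorm (u e) * vnorm (u e)) (fun e => ip (u e) (u e))) //.
  by move=> ee; rewrite vnorm_sq.
have Hsize : INR (size s) <= INR tau.
  apply: le_INR; apply/leP; rewrite /s size_filter.
  apply: leq_trans (count_size _ _) _; by rewrite size_iota leq_subLR addnC -leq_subLR.
have HN0 : 0 <= N by apply: Nsum_ge0.
have Ha2 : ip (fun j => gk j - gh j) (fun j => gk j - gh j) = vnorm (vsub gk gh) * vnorm (vsub gk gh).
  by rewrite vnorm_sq.
have Hv0 := vnorm_ge0 (vsub gk gh).
have Hac : 0 < alpha * LC by nra.
have Hkey : / (2 * (alpha * LC)) * (Lr * Lr * INR tau * Sd) = (Lr / LC * Lr * INR tau / alpha) / 2 * Sd.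
  field; lra.
have Htau : 0 <= INR tau by apply: pos_INR.
case: (Rle_lt_dec 0 Lr) => HLr0.
- have H1 : N * N <= INR tau * Sd.
    apply: Rle_trans HN _; apply: Rmult_le_compat => //; apply: pos_INR.
  have H2 : Lr / 2 * (N * N - Ss) <= Lr * INR tau * Sd.
    have : Lr * (N * N) <= Lr * (INR tau * Sd) by apply: Rmult_le_compat_l.
    have : 0 <= Lr * Ss by nra.
    have : 0 <= Lr * (INR tau * Sd) by nra.
    lra.
  have H3 : vnorm (vsub gk gh) * vnorm (vsub gk gh) <= Lr * Lr * INR tau * Sd.
    have : vnorm (vsub gk gh) * vnorm (vsub gk gh) <= (Lr * N) * (Lr * N).
      by apply: Rmult_le_compat.
    have : Lr * Lr * (N * N) <= Lr * Lr * (INR tau * Sd) by apply: Rmult_le_compat_l; nra.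
    lra.
  have H4 : / (2 * (alpha * LC)) * (vnorm (vsub gk gh) * vnorm (vsub gk gh)) <=
            / (2 * (alpha * LC)) * (Lr * Lr * INR tau * Sd).
    apply: Rmult_le_compat_l; [apply: Rlt_le; apply: Rinv_0_lt_compat; lra | exact: H3].
  rewrite E1 Ha2.
  have HH : Lr / LC * Lr * INR tau / alpha / 2 * Sd + Lr * INR tau * Sd =
         (Lr / LC * Lr * INR tau / alpha + 2 * Lr * INR tau) / 2 * Sd.
    field; lra.
  rewrite -/gh -/N -/Ss -/SLs in Hpf Hgi.
  lra.
- have Z := Lr_neg T m blk gradf Lr HLr HLr0.
  have HSz : Sd = 0 by rewrite /Sd big1 // => d _; apply: Z.
  have HSsz : Ss = 0 by rewrite /Ss big1 // => e _; apply: Z.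
  have HNz : N = 0.
    rewrite /N /Nsum big1 // => e _; by rewrite /vnorm Z sqrt_0.
  have Haz : vnorm (vsub gk gh) = 0 by rewrite /vnorm Z sqrt_0.
  have HSL0 : 0 <= SLd by apply: bigR_ge0 => d _; apply: qform_L_ge0.
  rewrite E1 Ha2 Haz HSz.
  rewrite -/gh -/N -/Ss -/SLs HNz HSsz in Hpf Hgi.
  lra.
Qed.


Lemma final_combine (m : nat) (F1 F2 Xf : 'I_m -> R) (Z w1 w2 c Sd SLd : R) :
  (0 < m)%nat ->
  (forall i, F1 i + / 2 * F2 i <= (Z - w1 + w2) + Xf i) ->
  \big[Rplus/0]_(i < m) Xf i <= - Z + c / 2 * Sd + / 2 * SLd ->
  / INR m * \big[Rplus/0]_(i < m) F1 i + / 2 * (/ INR m * \big[Rplus/0]_(i < m) F2 i)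
  - c / (2 * INR m) * Sd - / (2 * INR m) * SLd
  <= (1 - / INR m) * Z - w1 + w2.
Proof.
move=> Hm H1 H2.
have Hmm : 0 < INR m by apply: lt_0_INR; apply/ltP.
have Hs : \big[Rplus/0]_(i < m) (F1 i + / 2 * F2 i) <= \big[Rplus/0]_(i < m) ((Z - w1 + w2) + Xf i).
  by apply: bigR_le => i _; apply: H1.
rewrite bigR_add bigR_scal bigR_add bigR_const_ord in Hs.
set s1 := \big[Rplus/0]_(i < m) F1 i in Hs *.
set s2 := \big[Rplus/0]_(i < m) F2 i in Hs *.
set sx := \big[Rplus/0]_(i < m) Xf i in Hs H2 *.
set mm := INR m in Hs Hmm *.
have Hi : 0 < / mm by apply: Rinv_0_lt_compat.
have A1 := Rmult_le_compat_l (/ mm) _ _ (Rlt_le _ _ Hi) Hs.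
have A2 := Rmult_le_compat_l (/ mm) _ _ (Rlt_le _ _ Hi) H2.
have I1 : / mm * (s1 + / 2 * s2) = / mm * s1 + / 2 * (/ mm * s2) by field; lra.
have I2 : / mm * (mm * (Z - w1 + w2) + sx) = Z - w1 + w2 + / mm * sx by field; lra.
have I3 : / mm * (- Z + c / 2 * Sd + / 2 * SLd) = - (/ mm * Z) + c / (2 * mm) * Sd + / (2 * mm) * SLd
  by field; lra.
rewrite I1 I2 in A1; rewrite I3 in A2.
lra.
Qed.

Definition Xtail (T : finType) (m q : nat) (blk : T -> 'I_m)
  (gradf : (T -> R) -> T -> R) (g : forall i : 'I_m, (Blk blk i -> R) -> ereal)
  (A : 'I_q -> T -> R) (beta alpha LC : R) (xk hat : T -> R) (lam r : 'I_q -> R) (x : T -> R)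
  (i : 'I_m) : R :=
  / (2 * (alpha * LC)) * bsum blk i (fun j => (gradf xk j - gradf hat j) * (gradf xk j - gradf hat j))
     + efin_val (g i (restr blk i x)) - efin_val (g i (restr blk i xk))
     - bsum blk i (fun j => gradf hat j * (xk j - x j))
     + vsum (fun l => (lam l - beta * r l) * bsum blk i (fun j => A l j * (xk j - x j))).

Lemma perI' (T : finType) (m q : nat) (blk : T -> 'I_m)
  (f : (T -> R) -> R) (gradf : (T -> R) -> T -> R)
  (g : forall i : 'I_m, (Blk blk i -> R) -> ereal)
  (A : 'I_q -> T -> R) (Lb : 'I_m -> R) (Pb : 'I_m -> T -> T -> R)
  (beta rho alpha LC : R) (i : 'I_m)
  (xk hat : T -> R) (lam r : 'I_q -> R) (z x : T -> R) :
  is_gradient f gradf ->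
  (forall (z y : T -> R),
      bnorm blk i (vsub (gradf (vadd z (Uop blk i y))) (gradf z)) <= Lb i * bnorm blk i y) ->
  convex_efun (g i) ->
  (forall i j j', blk j = i -> blk j' = i -> Pb i j j' = Pb i j' j) ->
  0 < alpha * LC ->
  x_step blk gradf g A Pb beta i xk hat lam r z ->
  g i (restr blk i x) <> EInf ->
  let r1 := r_next blk A i xk z r in
  let lam1 := lam_next rho lam r1 in
  let P := Pfull blk Pb in
  let L := Lmat blk Lb in
  let M := fun j j' : T => P j j' - L j j' - alpha * LC * Imat j j' - beta * AtA A j j' in
  Fval blk f g z - Fval blk f g x - ip lam1 r1 + (beta - rho) * ip r1 r1 - beta / 2 * ip r1 r1
    + / 2 * qform P (vsub z x) + / 2 * qform M (vsub z xk)
  <= ((Fval blk f g xk - Fval blk f g x - ip lam r + beta * ip r r) - beta / 2 * ip r r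
     + / 2 * qform P (vsub xk x))
     + Xtail T m q blk gradf g A beta alpha LC xk hat lam r x i.
Proof.
move=> H1 H2 H3 H4 H5 H6 H7.
have H := perI T m q blk f gradf g A Lb Pb beta rho alpha LC i xk hat lam r z x H1 H2 H3 H4 H5 H6 H7.
have reassoc : forall K a b c d e : R, K + a + b - c - d + e = K + (a + b - c - d + e).
  by move=> *; ring.
simpl in H. rewrite reassoc in H; exact H.
Qed.

Lemma sum_Xtail (T : finType) (m q : nat) (blk : T -> 'I_m)
  (gradf : (T -> R) -> T -> R) (g : forall i : 'I_m, (Blk blk i -> R) -> ereal)
  (A : 'I_q -> T -> R) (beta alpha LC : R) (xk hat : T -> R) (lam r : 'I_q -> R) (x : T -> R) :
  \big[Rplus/0]_(i < m) Xtail T m q blk gradf g A beta alpha LC xk hat lam r x i =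
  / (2 * (alpha * LC)) * ip (fun j => gradf xk j - gradf hat j) (fun j => gradf xk j - gradf hat j)
  + (\big[Rplus/0]_(i < m) efin_val (g i (restr blk i x)))
  - (\big[Rplus/0]_(i < m) efin_val (g i (restr blk i xk)))
  - ip (gradf hat) (vsub xk x)
  + vsum (fun l => (lam l - beta * r l) * Amul A (vsub xk x) l).
Proof.
rewrite /Xtail bigR_add bigR_sub bigR_sub bigR_add bigR_scal.
rewrite -(vsum_part T m blk (fun j => (gradf xk j - gradf hat j) * (gradf xk j - gradf hat j))).
rewrite -(vsum_part T m blk (fun j => gradf hat j * (xk j - x j))).
congr (_ + _ - _ - _ + _).
rewrite (eq_bigr (fun i => vsum (fun l => bsum blk i (fun j => (lam l - beta * r l) * (A l j * (xk j - x j)))))); last first.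
  move=> i _; apply: vsum_ext => l; by rewrite /bsum bigR_scal.
rewrite (vsum_part_exch T _ m blk); apply: vsum_ext => l.
by rewrite vsum_scal.
Qed.


Theorem mainTheorem10
  (* coordinates of x: finite index set T partitioned into m blocks by blk *)
  (T : finType) (m q : nat) (blk : T -> 'I_m)
  (f : (T -> R) -> R) (gradf : (T -> R) -> T -> R)
  (g : forall i : 'I_m, (Blk blk i -> R) -> ereal)
  (A : 'I_q -> T -> R) (b : 'I_q -> R)
  (Lb : 'I_m -> R) (Lr : R) (Pb : 'I_m -> T -> T -> R)
  (beta rho alpha : R) (tau k : nat)
  (* one realization of the history: x^d, r^d, lambda^d, xhat^d, i_d *)
  (xs : nat -> T -> R) (rs lams : nat -> 'I_q -> R) (hats : nat -> T -> R)
  (idx : nat -> 'I_m)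
  (* xnew i = x^{k+1} in the event i_k = i *)
  (xnew : 'I_m -> T -> R)
  (x : T -> R) :
  (0 < m)%nat ->
  (* f convex, continuously differentiable with gradient gradf *)
  convex_fun f -> is_gradient f gradf -> continuous_map gradf ->
  (* g_i proper, convex, lower semicontinuous *)
  (forall i, proper_efun (g i) /\ convex_efun (g i) /\ lsc_efun (g i)) ->
  (* gradient Lipschitz continuity *)
  (forall i, 0 < Lb i) ->
  (forall i (z y : T -> R),
      bnorm blk i (vsub (gradf (vadd z (Uop blk i y))) (gradf z)) <= Lb i * bnorm blk i y) ->
  (forall i (z y : T -> R),
      vnorm (vsub (gradf (vadd z (Uop blk i y))) (gradf z)) <= Lr * bnorm blk i y) ->
  (* parameters *)
  0 < beta -> 0 < rho ->
  (* P_i symmetric PSD (on the coordinates of block i) *)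
  (forall i j j', blk j = i -> blk j' = i -> Pb i j j' = Pb i j' j) ->
  (forall i (w : Blk blk i -> R),
      0 <= qform (fun s s' : Blk blk i => Pb i (proj1_sig s) (proj1_sig s')) w) ->
  (* initialization: lambda^0 = 0, r^0 = A x^0 - b, x^0 in dom g *)
  (forall l, lams O l = 0) ->
  (forall l, rs O l = Amul A (xs O) l - b l) ->
  (forall i, g i (restr blk i (xs O)) <> EInf) ->
  (* iterations 0..k-1 of Algorithm 2 *)
  (forall d, (d < k)%nat ->
      x_step blk gradf g A Pb beta (idx d) (xs d) (hats d) (lams d) (rs d) (xs (S d)) /\
      (forall l, rs (S d) l = r_next blk A (idx d) (xs d) (xs (S d)) (rs d) l) /\
      (forall l, lams (S d) l = lam_next rho (lams d) (rs (S d)) l)) ->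
  (* bounded delay *)
  (forall d, (d <= k)%nat -> bounded_delay tau xs (hats d) d) ->
  (* iteration k, for every possible value i of i_k *)
  (forall i, x_step blk gradf g A Pb beta i (xs k) (hats k) (lams k) (rs k) (xnew i)) ->
  0 < alpha ->
  (* x independent of i_k, feasible, in dom F *)
  (forall l, Amul A x l = b l) ->
  (forall i, g i (restr blk i x) <> EInf) ->
  let r1 := fun i : 'I_m => r_next blk A i (xs k) (xnew i) (rs k) in
  let lam1 := fun i : 'I_m => lam_next rho (lams k) (r1 i) in
  let E := fun h : 'I_m -> R => / INR m * \big[Rplus/0]_(i < m) h i in
  let P := Pfull blk Pb in
  let L := Lmat blk Lb in
  let M := fun j j' : T =>
      P j j' - L j j' - alpha * Lc Lb * Imat j j' - beta * AtA A j j' in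
  let kappa := Lr / Lc Lb in
  E (fun i => Fval blk f g (xnew i) - Fval blk f g x - ip (lam1 i) (r1 i)
              + (beta - rho) * ip (r1 i) (r1 i) - beta / 2 * ip (r1 i) (r1 i)
              + / 2 * qform P (vsub (xnew i) x))
  + / 2 * E (fun i => qform M (vsub (xnew i) (xs k)))
  - (kappa * Lr * INR tau / alpha + 2 * Lr * INR tau) / (2 * INR m)
      * \big[Rplus/0]_(k - tau <= d < k) ip (vsub (xs (S d)) (xs d)) (vsub (xs (S d)) (xs d))
  - / (2 * INR m)
      * \big[Rplus/0]_(k - tau <= d < k) qform L (vsub (xs (S d)) (xs d))
  <= (1 - / INR m) * (Fval blk f g (xs k) - Fval blk f g x - ip (lams k) (rs k)
                      + beta * ip (rs k) (rs k))
     - beta / 2 * ip (rs k) (rs k) + / 2 * qform P (vsub (xs k) x).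
Proof.
move=> Hm Hconv Hg Hcont Hgi HLb0 HLb HLr Hbeta Hrho Hsym Hpsd Hlam0 Hr0 Hdom0 Hiter Hdelay
  Hnew Halpha Hax Hxdom r1 lam1 E P L M kappa.
have Hstep : forall d, (d < k)%nat -> forall j, blk j <> idx d -> xs (S d) j = xs d j.
  move=> d Hd j Hj; have [[Hs _] _] := Hiter d Hd; apply: Hs; by apply/eqP.
have Hr := r_invariant T m q blk A b xs rs idx k Hr0
  (fun d Hd => conj (Hstep d Hd) (proj1 (proj2 (Hiter d Hd)))) k (leqnn k).
have HLC : 0 < Lc Lb.
  have := Lc_ge m Lb (Ordinal Hm); have := HLb0 (Ordinal Hm); lra.
have Hac : 0 < alpha * Lc Lb by nra.
rewrite /E.
apply: (final_combine m _ _
  (Xtail T m q blk gradf g A beta alpha (Lc Lb) (xs k) (hats k) (lams k) (rs k) x)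
  _ _ _ _ _ _ Hm).
- move=> i.
  exact: (perI' T m q blk f gradf g A Lb Pb beta rho alpha (Lc Lb) i (xs k) (hats k) (lams k) (rs k) (xnew i) x
    Hg (HLb i) (proj1 (proj2 (Hgi i))) Hsym Hac (Hnew i) (Hxdom i)).
- rewrite sum_Xtail.
  have Hmu : vsum (fun l => (lams k l - beta * rs k l) * Amul A (vsub (xs k) x) l) =
             ip (lams k) (rs k) - beta * ip (rs k) (rs k).
    rewrite /ip -vsum_scal -vsum_sub; apply: vsum_ext => l.
    have -> : Amul A (vsub (xs k) x) l = rs k l.
      rewrite /Amul (vsum_ext _ (fun j => A l j * xs k j - A l j * x j)); last first.
        by move=> j; rewrite /vsub; ring.
      rewrite vsum_sub -/(Amul A (xs k) l) -/(Amul A x l) Hax (Hr l); ring.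
    ring.
  have Hglob := global_bound T m blk f gradf Lb Lr idx xs tau k (hats k) x alpha (Lc Lb)
    Hconv Hg HLb0 HLb HLr Halpha HLC Hstep (Hdelay k (leqnn k)).
  rewrite Hmu /kappa /L.
  rewrite /Fval.
  lra.
Qed.
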